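(* Let $G$ be an additive group, let $X$ be a complete non-Archimedean normed space over a field $K$ with a non-trivial non-Archimedean valuation $|\cdot|$, and let $k$ be a fixed integer with $k\neq 0,\pm1$. For $f:G\to X$ put $$Df(x,y)=f(x+ky)+f(x-ky)-k^2f(x+y)-k^2f(x-y)-2(1-k^2)f(x).$$ Let $\varphi:G\times G\to[0,\infty)$, and for $u\in G$ write $$\Phi(u)=\max\{|2(k^2-1)|\varphi(u,u),\ |k^2|\varphi(2u,u),\ \varphi(u,2u),\ \varphi((k+1)u,u),\ \varphi((k-1)u,u),\ \varphi(u,u),\ |k^2|\varphi(2u,2u),\ |2(k^2-1)|\varphi(u,2u),\ \varphi(u,3u),\ \varphi((2k+1)u,u),\ \varphi((2k-1)u,u)\}.$$ Suppose that $$\lim_{n\to\infty}\frac{1}{|2^n|}\max\{\varphi(2^{n+1}x,2^{n+1}y),\ |8|\varphi(2^nx,2^ny)\}=0,\qquad \lim_{n\to\infty}\frac{1}{|2^nk^2(k^2-1)|}\Phi(2^{n-1}x)=0$$ for all $x,y\in G$, and that for each $x\in G$ the limit $$\tilde{\varphi}_A(x):=\lim_{n\to\infty}\max\Big\{\frac{1}{|2^i|}\Phi(2^{i-1}x):\ 0\le i<n\Big\}$$ exists. Suppose that $f:G\to X$ is an odd function satisfying $\|Df(x,y)\|\le\varphi(x,y)$ for all $x,y\in G$. Then there exists an additive function $A:G\to X$ such that $$\|f(2x)-8f(x)-A(x)\|\le\frac{1}{|2k^2(k^2-1)|}\tilde{\varphi}_A(x)\qquad(x\in G).$$ Moreover,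 if $$\lim_{i\to\infty}\lim_{n\to\infty}\max\Big\{\frac{1}{|2^j|}\Phi(2^{j-1}x):\ i\le j<n+i\Big\}=0,$$ then $A$ is the unique additive function satisfying this inequality.
   Context: A non-Archimedean norm satisfies $\|x\|=0\iff x=0$, $\|rx\|=|r|\|x\|$ and $\|x+y\|\le\max\{\|x\|,\|y\|\}$. In the proof, $g(x)=f(2x)-8f(x)$ and $A(x)=\lim_{n\to\infty}g(2^nx)/2^n$. *)

(* Defs.v *)
From HB Require Import structures.
From mathcomp Require Import all_boot all_order all_algebra.
From mathcomp Require Import all_classical all_reals all_analysis.
Set Implicit Arguments. Unset Strict Implicit. Unset Printing Implicit Defensive.
Import Order.TTheory GRing.Theory Num.Theory.
Local Open Scope ring_scope.

Definition nA_valuation (R : realType) (K : fieldType) (v : K -> R) : Prop :=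
  [/\ forall r, 0 <= v r,
      forall r, v r = 0 <-> r = 0,
      forall r s, v (r * s) = v r * v s &
      forall r s, v (r + s) <= Num.max (v r) (v s)].

Definition nontrivial_valuation (R : realType) (K : fieldType) (v : K -> R) : Prop :=
  exists r : K, v r <> 0 /\ v r <> 1.

Definition nA_norm (R : realType) (K : fieldType) (X : lmodType K)
    (v : K -> R) (nrm : X -> R) : Prop :=
  [/\ forall x, nrm x = 0 <-> x = 0,
      forall (r : K) x, nrm (r *: x) = v r * nrm x &
      forall x y, nrm (x + y) <= Num.max (nrm x) (nrm y)].

Definition norm_complete (R : realType) (K : fieldType) (X : lmodType K)
    (nrm : X -> R) : Prop :=
  forall u : nat -> X,
    (forall e : R, 0 < e -> exists N, forall m n, (N <= m)%N -> (N <= n)%N ->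
        nrm (u m - u n) < e) ->
    exists l : X, forall e : R, 0 < e -> exists N, forall n, (N <= n)%N ->
        nrm (u n - l) < e.

Definition additive_fun (G : zmodType) (X : zmodType) (A : G -> X) : Prop :=
  forall x y, A (x + y) = A x + A y.

Definition Dk (G : zmodType) (X : zmodType) (k : int) (f : G -> X) (x y : G) : X :=
  f (x + y *~ k) + f (x - y *~ k) - f (x + y) *~ (k ^+ 2) - f (x - y) *~ (k ^+ 2)
  - f x *~ (2 * (1 - k ^+ 2)).

Definition Phi (R : realType) (K : fieldType) (G : zmodType) (v : K -> R) (k : int)
    (phi : G -> G -> R) (u : G) : R :=
  let c := v ((2 * (k ^+ 2 - 1))%:~R) in
  let k2 := v ((k ^+ 2)%:~R) in
  \big[Num.max/0]_(t <- [:: c * phi u u; k2 * phi (u *+ 2) u; phi u (u *+ 2);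
         phi (u *~ (k + 1)) u; phi (u *~ (k - 1)) u; phi u u;
         k2 * phi (u *+ 2) (u *+ 2); c * phi u (u *+ 2); phi u (u *+ 3);
         phi (u *~ (2 * k + 1)) u; phi (u *~ (2 * k - 1)) u]) t.

(* The term (1/|2^i|) Phi(2^{i-1} x) of the paper, for i = j+1 >= 1,
   i.e. (1/|2^(j+1)|) Phi(2^j x). *)
Definition PhiTerm (R : realType) (K : fieldType) (G : zmodType) (v : K -> R) (k : int)
    (phi : G -> G -> R) (x : G) (j : nat) : R :=
  Phi v k phi (x *+ (2 ^ j)) / v ((2%:R : K) ^+ j.+1).

(* max { (1/|2^i|) Phi(2^{i-1}x) : i0 <= i < i0 + n }, written with j = i - 1 *)
Definition PhiMax (R : realType) (K : fieldType) (G : zmodType) (v : K -> R) (k : int)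
    (phi : G -> G -> R) (x : G) (i0 n : nat) : R :=
  \big[Num.max/0]_(i0 <= j < i0 + n) PhiTerm v k phi x j.

(* Main.v *)
Require Import Defs.
From HB Require Import structures.
From mathcomp Require Import all_boot all_order all_algebra.
From mathcomp Require Import all_classical all_reals all_analysis.
From mathcomp Require Import ring lra zify.
Import Order.TTheory GRing.Theory Num.Theory.
Import numFieldNormedType.Exports.
Local Open Scope classical_set_scope.
Local Open Scope ring_scope.
Set Implicit Arguments. Unset Strict Implicit. Unset Printing Implicit Defensive.

Section TE.
Variable M : zmodType.
Definition te := (int * M)%type.
HB.instance Definition _ := GRing.Zmodule.on te.
Definition te_one : te := (1, 0).
Definition te_mul (a b : te) : te := (a.1 * b.1, a.2 *~ b.1 + b.2 *~ a.1).
Lemma te_mulA : associative te_mul.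
Proof.
move=> [a m] [b n] [c p]; rewrite /te_mul /=; congr pair; first by rewrite mulrA.
rewrite !mulrzDl -!mulrzA addrA; congr (_ + _ + _); congr (_ *~ _);
by rewrite mulrC.
Qed.
Lemma te_mulC : commutative te_mul.
Proof. by move=> [a m] [b n]; rewrite /te_mul /= mulrC addrC. Qed.
Lemma te_mul1 : left_id te_one te_mul.
Proof. by move=> [a m]; rewrite /te_mul /= mul1r mul0rz add0r mulr1z. Qed.
Lemma te_mulDl : left_distributive te_mul +%R.
Proof.
move=> [a m] [b n] [c p]; rewrite /te_mul /=; congr pair; first by rewrite mulrDl.
by rewrite mulrzDl mulrzDr addrACA.
Qed.
Lemma te_one0 : te_one != 0.
Proof. by rewrite /te_one; apply/eqP => -[]. Qed.
HB.instance Definition _ := GRing.Zmodule_isComNzRing.Build te te_mulA te_mulC te_mul1 te_mulDl te_one0.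

Definition inj (m : M) : te := (0, m).
Lemma injD a b : inj (a + b) = inj a + inj b. Proof. by rewrite /inj; congr pair; rewrite addr0. Qed.
Lemma injN a : inj (- a) = - inj a. Proof. by rewrite /inj; congr pair; rewrite oppr0. Qed.
Lemma injB a b : inj (a - b) = inj a - inj b. Proof. by rewrite injD injN. Qed.
Lemma inj0 : inj 0 = 0. Proof. by []. Qed.
Lemma natr_te (n : nat) : (n%:R : te) = (n%:R, 0).
Proof. elim: n => [//|n IH]; rewrite -natr1 IH /= -[in RHS]natr1. by congr pair; rewrite addr0. Qed.
Lemma intr_te (z : int) : (z%:~R : te) = (z, 0).
Proof.
case: z => n.
  by rewrite -[_%:~R]/(n%:R) natr_te natz.

rewrite NegzE mulrNz -[n.+1%:~R]/(n.+1%:R) natr_te natz.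
by apply/eqP; rewrite xpair_eqE /= oppr0 !eqxx.
Qed.
Lemma injMz a (z : int) : inj (a *~ z) = inj a * z%:~R.
Proof. rewrite intr_te; rewrite [RHS]/GRing.mul /= /te_mul /= mul0r mul0rz addr0 //. Qed.
Lemma injMn a (n : nat) : inj (a *+ n) = inj a * n%:R.
Proof. by rewrite pmulrn injMz. Qed.
Lemma inj_inj : injective inj. Proof. by move=> a b [] . Qed.
End TE.
Ltac gz := apply: inj_inj; rewrite ?(injD, injB, injN, injMz, injMn, inj0); ring.

Ltac toTE h := move/(congr1 (@inj _)): h; rewrite inj0 ?(injD, injB, injN, injMz, injMn) => h.
Ltac lc6 h1 c1 h2 c2 h3 c3 h4 c4 h5 c5 h6 c6 :=
  match type of h1 with ?L1 = 0 => match type of h2 with ?L2 = 0 =>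
  match type of h3 with ?L3 = 0 => match type of h4 with ?L4 = 0 =>
  match type of h5 with ?L5 = 0 => match type of h6 with ?L6 = 0 =>
  transitivity (c1%:~R * L1 + c2%:~R * L2 + c3%:~R * L3 + c4%:~R * L4 + c5%:~R * L5 + c6%:~R * L6);
    [ring | by rewrite h1 h2 h3 h4 h5 h6 !mulr0 !addr0]
  end end end end end end.

Definition Qe (G X : zmodType) (A : G -> X) (x y : G) : X :=
  A (x + y *+ 2) - A (x + y) *+ 4 + A x *+ 6 - A (x - y) *+ 4 + A (x - y *+ 2).
Definition Ee (G X : zmodType) (A : G -> X) (x y : G) : X :=
  A (x + y) + A (x - y) - A x *+ 2.

Lemma Dk_at (G X : zmodType) (k : int) (A : G -> X) :
  (forall p q, Dk k A p q = 0) -> forall p q a b c d,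
  p + q *~ k = a -> p - q *~ k = b -> p + q = c -> p - q = d ->
  A a + A b - A c *~ (k ^+ 2) - A d *~ (k ^+ 2) - A p *~ (2 * (1 - k ^+ 2)) = 0.
Proof. by move=> hD p q a b c d <- <- <- <-; exact: hD. Qed.

Lemma alg_Q (G X : zmodType) (k : int) (A : G -> X) :
  (forall p q, Dk k A p q = 0) -> forall x y, (Qe A x y) *~ (k ^+ 2 * (k ^+ 2 - 1)) = 0.
Proof.
move=> hD x y.
have h1 := Dk_at hD (p:=x) (q:=y*+2) (a:=x + y *~ (2*k)) (b:=x + y *~ (-(2*k)))
   (c:=x + y*+2) (d:=x - y*+2) ltac:(gz) ltac:(gz) ltac:(gz) ltac:(gz).
have h2 := Dk_at hD (p:=x + y*~k) (q:=y) (a:=x + y *~ (2*k)) (b:=x)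
   (c:=x + y*~(k+1)) (d:=x + y*~(k-1)) ltac:(gz) ltac:(gz) ltac:(gz) ltac:(gz).
have h3 := Dk_at hD (p:=x + y*~(-k)) (q:=y) (a:=x) (b:=x + y *~ (-(2*k)))
   (c:=x + y*~(-k+1)) (d:=x + y*~(-k-1)) ltac:(gz) ltac:(gz) ltac:(gz) ltac:(gz).
have h4 := Dk_at hD (p:=x) (q:=y) (a:=x + y *~ k) (b:=x + y*~(-k))
   (c:=x + y) (d:=x - y) ltac:(gz) ltac:(gz) ltac:(gz) ltac:(gz).
have h5 := Dk_at hD (p:=x + y) (q:=y) (a:=x + y *~ (k+1)) (b:=x + y*~(-k+1))
   (c:=x + y*+2) (d:=x) ltac:(gz) ltac:(gz) ltac:(gz) ltac:(gz).
have h6 := Dk_at hD (p:=x - y) (q:=y) (a:=x + y *~ (k-1)) (b:=x + y*~(-k-1))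
   (c:=x) (d:=x - y*+2) ltac:(gz) ltac:(gz) ltac:(gz) ltac:(gz).
apply: (@inj_inj X); rewrite inj0 /Qe ?(injD, injB, injN, injMz, injMn).
toTE h1. toTE h2. toTE h3. toTE h4. toTE h5. toTE h6.
lc6 h1 (1:int) h2 (-1:int) h3 (-1:int) h4 (2*k^+2-2) h5 (-k^+2) h6 (-k^+2).
Qed.

Ltac lcn7 h1 c1 h2 c2 h3 c3 h4 c4 h5 c5 h6 c6 h7 c7 :=
  match type of h1 with ?L1 = 0 => match type of h2 with ?L2 = 0 =>
  match type of h3 with ?L3 = 0 => match type of h4 with ?L4 = 0 =>
  match type of h5 with ?L5 = 0 => match type of h6 with ?L6 = 0 =>
  match type of h7 with ?L7 = 0 =>
  transitivity (c1%:~R * L1 + c2%:~R * L2 + c3%:~R * L3 + c4%:~R * L4 + c5%:~R * L5 + c6%:~R * L6 + c7%:~R * L7);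
    [ring | by rewrite h1 h2 h3 h4 h5 h6 h7 !mulr0 !addr0]
  end end end end end end end.

Lemma Q_at (G X : zmodType) (A : G -> X) :
  (forall p q, Qe A p q = 0) -> forall p q a b c d,
  p + q *+ 2 = a -> p + q = b -> p - q = c -> p - q *+ 2 = d ->
  A a - A b *+ 4 + A p *+ 6 - A c *+ 4 + A d = 0.
Proof. by move=> hQ p q a b c d <- <- <- <-; exact: hQ. Qed.

Lemma alg_J (G X : zmodType) (A : G -> X) :
  (forall p q, Qe A p q = 0) -> forall x y z,
  (Ee A (x + z) y + Ee A (x - z) y - Ee A x y *+ 2) *+ 12 = 0.
Proof.
move=> hQ x y z.
have h0 := Q_at hQ (p:=x) (q:=(y *~ (1) + z *~ (1))) (a:=(x + y *~ (2) + z *~ (2))) (b:=(x + z + y)) (c:=(x - z - y)) (d:=(x + y *~ (-2) + z *~ (-2))) ltac:(gz) ltac:(gz) ltac:(gz) ltac:(gz).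
have h1 := Q_at hQ (p:=x) (q:=(y *~ (1) + z *~ (-1))) (a:=(x + y *~ (2) + z *~ (-2))) (b:=(x - z + y)) (c:=(x + z - y)) (d:=(x + y *~ (-2) + z *~ (2))) ltac:(gz) ltac:(gz) ltac:(gz) ltac:(gz).
have h2 := Q_at hQ (p:=x) (q:=(y *~ (0) + z *~ (1))) (a:=(x + y *~ (0) + z *~ (2))) (b:=(x + z)) (c:=(x - z)) (d:=(x + y *~ (0) + z *~ (-2))) ltac:(gz) ltac:(gz) ltac:(gz) ltac:(gz).
have h3 := Q_at hQ (p:=(x + y *~ (0) + z *~ (2))) (q:=(y *~ (1) + z *~ (0))) (a:=(x + y *~ (2) + z *~ (2))) (b:=(x + y *~ (1) + z *~ (2))) (c:=(x + y *~ (-1) + z *~ (2))) (d:=(x + y *~ (-2) + z *~ (2))) ltac:(gz) ltac:(gz) ltac:(gz) ltac:(gz).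
have h4 := Q_at hQ (p:=(x + y *~ (0) + z *~ (-2))) (q:=(y *~ (1) + z *~ (0))) (a:=(x + y *~ (2) + z *~ (-2))) (b:=(x + y *~ (1) + z *~ (-2))) (c:=(x + y *~ (-1) + z *~ (-2))) (d:=(x + y *~ (-2) + z *~ (-2))) ltac:(gz) ltac:(gz) ltac:(gz) ltac:(gz).
have h5 := Q_at hQ (p:=(x + y)) (q:=(y *~ (0) + z *~ (1))) (a:=(x + y *~ (1) + z *~ (2))) (b:=(x + z + y)) (c:=(x - z + y)) (d:=(x + y *~ (1) + z *~ (-2))) ltac:(gz) ltac:(gz) ltac:(gz) ltac:(gz).
have h6 := Q_at hQ (p:=(x - y)) (q:=(y *~ (0) + z *~ (1))) (a:=(x + y *~ (-1) + z *~ (2))) (b:=(x + z - y)) (c:=(x - z - y)) (d:=(x + y *~ (-1) + z *~ (-2))) ltac:(gz) ltac:(gz) ltac:(gz) ltac:(gz).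
apply: (@inj_inj X); rewrite inj0 /Ee ?(injD, injB, injN, injMz, injMn).
toTE h0. toTE h1. toTE h2. toTE h3. toTE h4. toTE h5. toTE h6.
lcn7 h0 (1:int) h1 (1:int) h2 (6:int) h3 (-1:int) h4 (-1:int) h5 (-4:int) h6 (-4:int).

Qed.

Ltac xring := apply: inj_inj; rewrite ?(injD, injB, injN, injMz, injMn, inj0); ring.

Lemma cancel_n (K : fieldType) (X : lmodType K) (w : X) (n : nat) :
  (n%:R : K) != 0 -> w *+ n = 0 -> w = 0.
Proof. by move=> hn; rewrite -scaler_nat => /eqP; rewrite scaler_eq0 (negbTE hn) => /eqP. Qed.

Lemma alg_add (K : fieldType) (G : zmodType) (X : lmodType K) (A : G -> X) :
  (2%:R : K) != 0 -> (3%:R : K) != 0 ->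
  (forall x, A (- x) = - A x) -> (forall x, A (x *+ 2) = A x *+ 2) ->
  (forall p q, Qe A p q = 0) -> additive_fun A.
Proof.
move=> h2 h3 hodd hdbl hQ.
have h12 : (12%:R : K) != 0.
  by rewrite (_ : 12 = 2 * 2 * 3)%N // !natrM !mulf_neq0.
have h6 : (6%:R : K) != 0.
  by rewrite (_ : 6 = 2 * 3)%N // !natrM !mulf_neq0.
have hJ x y z : Ee A (x + z) y + Ee A (x - z) y - Ee A x y *+ 2 = 0.
  exact: (cancel_n h12 (alg_J hQ x y z)).
have hA0 : A 0 = 0.
  apply: (@cancel_n K X (A 0) 2 h2). rewrite mulr2n -{1}oppr0 hodd.
  by rewrite addNr.
have hE0 y : Ee A 0 y = 0 by rewrite /Ee add0r sub0r hodd hA0 mul0rn subr0 addrN.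
have hE2x x y : Ee A (x *+ 2) y = Ee A x y *+ 2.
  have := hJ x y x; rewrite subrr hE0 addr0 -mulr2n => /eqP; rewrite subr_eq0 => /eqP //.
have hE2y x y : Ee A x (y *+ 2) = Ee A x y *+ 4.
  have := hQ x y => /eqP; rewrite -subr_eq0 subr0 => /eqP hq.
  apply/eqP; rewrite -subr_eq0; apply/eqP; rewrite -hq /Ee /Qe; xring.
have hEd x y : Ee A (x *+ 2) (y *+ 2) = Ee A x y *+ 2.
  by rewrite /Ee -mulrnDl -mulrnBl !hdbl -!mulrnDl -mulrnBl.
have hE x y : Ee A x y = 0.
  apply: (cancel_n h6).
  have e1 := hEd x y; rewrite hE2y hE2x -mulrnA in e1.
  apply/eqP; move/eqP: e1; rewrite -subr_eq0 (_ : 2 * 4 = 6 + 2)%N // mulrnDr addrK.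
  by [].
move=> a b.
have e1 := hE a b; have e2 := hE b a.
rewrite /Ee (addrC b a) -(opprB a b) hodd in e2. rewrite /Ee in e1.
apply/eqP; rewrite -subr_eq0; apply/eqP; apply: (cancel_n h2).
rewrite -[RHS](addr0 0) -{1}e1 -e2. xring.
Qed.

Lemma Dk_eq (G X : zmodType) (k : int) (f : G -> X) p q a b c d :
  p + q *~ k = a -> p - q *~ k = b -> p + q = c -> p - q = d ->
  Dk k f p q = f a + f b - f c *~ (k ^+ 2) - f d *~ (k ^+ 2) - f p *~ (2 * (1 - k ^+ 2)).
Proof. by move=> <- <- <- <-. Qed.

Lemma g_ident (G X : zmodType) (k : int) (f : G -> X) :
  (forall x, f (- x) = - f x) -> f 0 = 0 -> forall u,
  ((f (u *+ 2 *+ 2) - f (u *+ 2) *+ 8) - (f (u *+ 2) - f u *+ 8) *+ 2) *~ (k ^+ 2 * (k ^+ 2 - 1)) =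
  Dk k f u (u *+ 3) - Dk k f (u *~ (2 * k + 1)) u + Dk k f (u *~ (2 * k - 1)) u
  - Dk k f (u *+ 2) (u *+ 2) *~ (k ^+ 2) + Dk k f u u *~ (4 * k ^+ 2 - 3)
  + Dk k f u (u *+ 2) *~ (2 * k ^+ 2) - Dk k f (u *+ 2) u *~ (2 * k ^+ 2)
  - Dk k f (u *~ (k + 1)) u *~ 2 + Dk k f (u *~ (k - 1)) u *~ 2.
Proof.
move=> hodd hf0 u.
rewrite (_ : u *+ 2 *+ 2 = u *+ 4); last by rewrite -mulrnA.
rewrite (@Dk_eq _ _ k f u u (u *~ (k + 1)) (- (u *~ (k - 1))) (u *+ 2) 0); try gz.
rewrite (@Dk_eq _ _ k f (u *+ 2) u (u *~ (k + 2)) (- (u *~ (k - 2))) (u *+ 3) u); try gz.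
rewrite (@Dk_eq _ _ k f u (u *+ 2) (u *~ (2 * k + 1)) (- (u *~ (2 * k - 1))) (u *+ 3) (- u)); try gz.
rewrite (@Dk_eq _ _ k f (u *~ (k + 1)) u (u *~ (2 * k + 1)) u (u *~ (k + 2)) (u *~ k)); try gz.
rewrite (@Dk_eq _ _ k f (u *~ (k - 1)) u (u *~ (2 * k - 1)) (- u) (u *~ k) (u *~ (k - 2))); try gz.
rewrite (@Dk_eq _ _ k f (u *+ 2) (u *+ 2) (u *~ (2 * k + 2)) (- (u *~ (2 * k - 2))) (u *+ 4) 0); try gz.
rewrite (@Dk_eq _ _ k f u (u *+ 3) (u *~ (3 * k + 1)) (- (u *~ (3 * k - 1))) (u *+ 4) (- (u *+ 2))); try gz.
rewrite (@Dk_eq _ _ k f (u *~ (2 * k + 1)) u (u *~ (3 * k + 1)) (u *~ (k + 1)) (u *~ (2 * k + 2)) (u *~ (2 * k))); try gz.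
rewrite (@Dk_eq _ _ k f (u *~ (2 * k - 1)) u (u *~ (3 * k - 1)) (u *~ (k - 1)) (u *~ (2 * k)) (u *~ (2 * k - 2))); try gz.
rewrite !hodd hf0.
xring.
Qed.

Section Val.
Variables (R : realType) (K : fieldType) (v : K -> R).
Hypothesis hv : nA_valuation v.

Lemma v_ge0 r : 0 <= v r. Proof. by case: hv. Qed.
Lemma vM r s : v (r * s) = v r * v s. Proof. by case: hv. Qed.
Lemma vD r s : v (r + s) <= Num.max (v r) (v s). Proof. by case: hv. Qed.
Lemma v_eq0 r : v r = 0 <-> r = 0. Proof. by case: hv. Qed.
Lemma v0 : v 0 = 0. Proof. exact/v_eq0. Qed.
Lemma v_neq0 r : r != 0 -> 0 < v r.
Proof.
move=> hr; rewrite lt_def v_ge0 andbT; apply/eqP => /v_eq0 h.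
by rewrite h eqxx in hr.
Qed.
Lemma v1 : v 1 = 1.
Proof.
have h : v 1 * v 1 = v 1 * 1 by rewrite -vM !mulr1.
apply: (mulfI _ h); apply/eqP => /v_eq0 /eqP; exact/negP/oner_neq0.
Qed.
Lemma vN1 : v (-1) = 1.
Proof.
have h : v (-1) ^+ 2 = 1 by rewrite expr2 -vM mulrNN mulr1 v1.
move/eqP: h; rewrite sqrf_eq1 => /orP [/eqP //|/eqP h].
have := v_ge0 (-1); rewrite h; lra.
Qed.
Lemma vN r : v (- r) = v r. Proof. by rewrite -mulN1r vM vN1 mul1r. Qed.
Lemma vX r n : v (r ^+ n) = v r ^+ n.
Proof. elim: n => [|n IH]; by rewrite ?expr0 ?v1 // !exprS vM IH. Qed.
Lemma vnat n : v (n%:R) <= 1.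
Proof.
elim: n => [|n IH]; first by rewrite v0.
rewrite -natr1; apply: le_trans (vD _ _) _; by rewrite ge_max IH v1 lexx.
Qed.
Lemma vint (z : int) : v (z%:~R) <= 1.
Proof. by case: z => n; [exact: vnat | rewrite NegzE mulrNz vN; exact: vnat]. Qed.
Lemma vV r : v (r ^-1) = (v r)^-1.
Proof.
have [->|hr] := eqVneq r 0; first by rewrite invr0 v0 invr0.
have h : v r * v (r^-1) = 1 by rewrite -vM mulfV // v1.
by rewrite -[LHS]mul1r -(mulVf (lt0r_neq0 (v_neq0 hr))) -mulrA h mulr1.
Qed.
Lemma v_le1_mul r s : 0 <= s -> v r <= 1 -> v r * s <= s.
Proof. by move=> hs hr; apply: ler_piMl. Qed.

Variables (X : lmodType K) (nrm : X -> R).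
Hypothesis hn : nA_norm v nrm.

Lemma nZ (r : K) x : nrm (r *: x) = v r * nrm x. Proof. by case: hn. Qed.
Lemma nD x y : nrm (x + y) <= Num.max (nrm x) (nrm y). Proof. by case: hn. Qed.
Lemma n_eq0 x : nrm x = 0 <-> x = 0. Proof. by case: hn. Qed.
Lemma n0 : nrm 0 = 0. Proof. exact/n_eq0. Qed.
Lemma nN x : nrm (- x) = nrm x. Proof. by rewrite -scaleN1r nZ vN1 mul1r. Qed.
Lemma n_ge0 x : 0 <= nrm x.
Proof.
have := nD x (- x); rewrite addrN n0 nN.
by rewrite /Num.max; case: ifP.
Qed.
Lemma nDle x y M : nrm x <= M -> nrm y <= M -> nrm (x + y) <= M.
Proof. move=> h1 h2; apply: le_trans (nD _ _) _; by rewrite ge_max h1 h2. Qed.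
Lemma nBle x y M : nrm x <= M -> nrm y <= M -> nrm (x - y) <= M.
Proof. by move=> h1 h2; apply: nDle => //; rewrite nN. Qed.
Lemma nDlt x y M : nrm x < M -> nrm y < M -> nrm (x + y) < M.
Proof. move=> h1 h2; apply: le_lt_trans (nD _ _) _; by rewrite gt_max h1 h2. Qed.
Lemma nMz x (z : int) : nrm (x *~ z) = v z%:~R * nrm x.
Proof. by rewrite -scaler_int nZ. Qed.
Lemma nMn x (m : nat) : nrm (x *+ m) = v m%:R * nrm x.
Proof. by rewrite -scaler_nat nZ. Qed.
Lemma nMz_le x (z : int) : nrm (x *~ z) <= nrm x.
Proof. by rewrite nMz; apply: v_le1_mul; [exact: n_ge0 | exact: vint]. Qed.
Lemma nMn_le x (m : nat) : nrm (x *+ m) <= nrm x.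
Proof. by rewrite nMn; apply: v_le1_mul; [exact: n_ge0 | exact: vnat]. Qed.
Lemma n_le0 x : nrm x <= 0 -> x = 0.
Proof. by move=> h; apply/n_eq0/le_anti; rewrite h n_ge0. Qed.
Lemma nB_sym x y : nrm (x - y) = nrm (y - x). Proof. by rewrite -opprB nN. Qed.

End Val.

Lemma nBlt (R : realType) (K : fieldType) (v : K -> R) (X : lmodType K) (nrm : X -> R) :
  nA_valuation v -> nA_norm v nrm -> forall x y M, nrm x < M -> nrm y < M -> nrm (x - y) < M.
Proof. by move=> hv hn x y M h1 h2; apply: (nDlt hn) => //; rewrite (nN hv hn). Qed.

Lemma le_bigmax_list (R : realType) (s : seq R) t : t \in s -> t <= \big[Num.max/0]_(x <- s) x.
Proof.
elim: s => [//|a s IH]; rewrite inE big_cons => /orP [/eqP ->|/IH h].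
  by rewrite le_max lexx.
by rewrite le_max h orbT.
Qed.

Lemma bigmax_list_ge0 (R : realType) (s : seq R) : 0 <= \big[Num.max/0]_(x <- s) x.
Proof. elim: s => [|a s IH]; first by rewrite big_nil. by rewrite big_cons le_max IH orbT. Qed.

Lemma le_Phi (R : realType) (K : fieldType) (G : zmodType) (v : K -> R) (k : int)
    (phi : G -> G -> R) (u : G) t :
  t \in [:: v ((2 * (k ^+ 2 - 1))%:~R) * phi u u; v ((k ^+ 2)%:~R) * phi (u *+ 2) u; phi u (u *+ 2);
         phi (u *~ (k + 1)) u; phi (u *~ (k - 1)) u; phi u u;
         v ((k ^+ 2)%:~R) * phi (u *+ 2) (u *+ 2); v ((2 * (k ^+ 2 - 1))%:~R) * phi u (u *+ 2); phi u (u *+ 3);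
         phi (u *~ (2 * k + 1)) u; phi (u *~ (2 * k - 1)) u] -> t <= Phi v k phi u.
Proof. exact: le_bigmax_list. Qed.

Lemma Phi_ge0 (R : realType) (K : fieldType) (G : zmodType) (v : K -> R) (k : int)
    (phi : G -> G -> R) (u : G) : 0 <= Phi v k phi u.
Proof. exact: bigmax_list_ge0. Qed.

Ltac mem_tac := rewrite !inE eqxx ?orbT ?orTb.

Lemma gstep (R : realType) (K : fieldType) (G : zmodType) (X : lmodType K)
    (v : K -> R) (nrm : X -> R) (k : int) (phi : G -> G -> R) (f : G -> X) :
  nA_valuation v -> nA_norm v nrm ->
  (forall x, f (- x) = - f x) -> f 0 = 0 ->
  (forall x y, nrm (Dk k f x y) <= phi x y) ->
  forall u, v ((k ^+ 2 * (k ^+ 2 - 1))%:~R) *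
    nrm ((f (u *+ 2 *+ 2) - f (u *+ 2) *+ 8) - (f (u *+ 2) - f u *+ 8) *+ 2) <= Phi v k phi u.
Proof.
move=> hv hn hodd hf0 hD u.
rewrite -(nMz hn) (g_ident k hodd hf0 u).
have hl t : t \in [:: v ((2 * (k ^+ 2 - 1))%:~R) * phi u u; v ((k ^+ 2)%:~R) * phi (u *+ 2) u; phi u (u *+ 2);
         phi (u *~ (k + 1)) u; phi (u *~ (k - 1)) u; phi u u;
         v ((k ^+ 2)%:~R) * phi (u *+ 2) (u *+ 2); v ((2 * (k ^+ 2 - 1))%:~R) * phi u (u *+ 2); phi u (u *+ 3);
         phi (u *~ (2 * k + 1)) u; phi (u *~ (2 * k - 1)) u] -> t <= Phi v k phi u.
  exact: le_Phi.
have hz p q (z : int) : nrm (Dk k f p q *~ z) <= phi p q.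
  exact: le_trans (nMz_le hv hn _ _) (hD p q).
have hk2 p q (z : int) : nrm (Dk k f p q *~ (z * k ^+ 2)) <= v ((k ^+ 2)%:~R) * phi p q.
  rewrite (nMz hn) intrM (vM hv); apply: le_trans (_ : _ <= v (k ^+ 2)%:~R * nrm (Dk k f p q)) _.
    rewrite -mulrA; apply: ler_piMl; last exact: (vint hv).
    by apply: mulr_ge0; [exact: (v_ge0 hv) | exact: (n_ge0 hv hn)].
  by apply: ler_wpM2l; [exact: (v_ge0 hv) | exact: hD].
have hD' p q : nrm (Dk k f p q) <= phi p q := hD p q.
apply: (nDle hn); last by apply: le_trans (hz _ _ _) _; apply: hl; mem_tac.
apply: (nBle hv hn); last by apply: le_trans (hz _ _ _) _; apply: hl; mem_tac.
apply: (nBle hv hn); last by apply: le_trans (hk2 _ _ _) _; apply: hl; mem_tac.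
apply: (nDle hn); last by apply: le_trans (hz _ _ _) _; apply: hl; mem_tac.
apply: (nDle hn); last by apply: le_trans (hz _ _ _) _; apply: hl; mem_tac.
apply: (nBle hv hn); last by rewrite -[k ^+ 2]mul1r; apply: le_trans (hk2 _ _ _) _; apply: hl; mem_tac.
apply: (nDle hn); last by apply: le_trans (hD' _ _) _; apply: hl; mem_tac.
apply: (nBle hv hn); by apply: le_trans (hD' _ _) _; apply: hl; mem_tac.
Qed.

Section Conv.
Variables (R : realType) (K : fieldType) (v : K -> R).
Hypothesis hv : nA_valuation v.
Variables (X : lmodType K) (nrm : X -> R).
Hypothesis hn : nA_norm v nrm.

Definition convn (u : nat -> X) (l : X) :=
  forall e : R, 0 < e -> exists N, forall n, (N <= n)%N -> nrm (u n - l) < e.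

Lemma le0_of_lt (x : R) : (forall e : R, 0 < e -> x < e) -> x <= 0.
Proof. by move=> h; apply/ler_addgt0Pr => e he; rewrite add0r ltW // h. Qed.

Lemma conv_uniq u l l' : convn u l -> convn u l' -> l = l'.
Proof.
move=> h1 h2; apply/subr0_eq/(n_le0 hv hn)/le0_of_lt => e he.
have [N1 hN1] := h1 e he; have [N2 hN2] := h2 e he.
have -> : l - l' = (l - u (maxn N1 N2)) + (u (maxn N1 N2) - l') by rewrite addrA subrK.
apply: (nDlt hn); rewrite ?(nB_sym hv hn l); [apply: hN1 | apply: hN2]; by rewrite leq_max leqnn ?orbT.
Qed.

Lemma conv_ext u u' l : (forall n, u n = u' n) -> convn u l -> convn u' l.
Proof. by move=> h hc e he; have [N hN] := hc e he; exists N => n hn'; rewrite -h; exact: hN. Qed.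

Lemma conv_shift u l : convn u l -> convn (fun n => u n.+1) l.
Proof. by move=> hc e he; have [N hN] := hc e he; exists N => n hn'; apply: hN; exact: leqW. Qed.

Lemma conv_N u l : convn u l -> convn (fun n => - u n) (- l).
Proof. by move=> hc e he; have [N hN] := hc e he; exists N => n hn'; rewrite -opprD (nN hv hn); exact: hN. Qed.

Lemma conv_Mn u l m : convn u l -> convn (fun n => u n *+ m) (l *+ m).
Proof.
move=> hc e he; have [N hN] := hc e he; exists N => n hn'.
by rewrite -mulrnBl; apply: le_lt_trans (nMn_le hv hn _ _) _; exact: hN.
Qed.

Lemma near_oo (P : nat -> Prop) : (\forall n \near \oo, P n) -> exists N, forall n, (N <= n)%N -> P n.
Proof. by move=> [N _ hN]; exists N => n hn'; apply: hN. Qed.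

Lemma cvg0_lt (s : nat -> R) : s @ \oo --> 0 -> forall e, 0 < e -> exists N, forall n, (N <= n)%N -> s n < e.
Proof.
move=> hs e he; have [N hN] := near_oo ((cvgrPdist_lt _ _).1 hs e he).
exists N => n /hN; rewrite sub0r normrN; apply: le_lt_trans; exact: ler_norm.
Qed.

Lemma steps_cauchy (u : nat -> X) (s : nat -> R) :
  (forall n, nrm (u n.+1 - u n) <= s n) -> s @ \oo --> 0 ->
  forall e : R, 0 < e -> exists N, forall m n, (N <= m)%N -> (N <= n)%N -> nrm (u m - u n) < e.
Proof.
move=> hst hs e he; have [N hN] := cvg0_lt hs he.
have hi m i : (N <= m)%N -> nrm (u (m + i)%N - u m) < e.
  move=> hm; elim: i => [|i IH]; first by rewrite addn0 subrr (n0 hn).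
  rewrite addnS (_ : u (m + i).+1 - u m = (u (m + i).+1 - u (m + i)%N) + (u (m + i)%N - u m)); last by rewrite addrA subrK.
  apply: (nDlt hn) => //; apply: le_lt_trans (hst _) _; apply: hN; exact: leq_trans hm (leq_addr _ _).
exists N => m n hm hn'.
have [hmn|hnm] := leqP m n.
  by rewrite (nB_sym hv hn) -(subnKC hmn); exact: hi.
by rewrite -(subnKC (ltnW hnm)); exact: hi.
Qed.

End Conv.

Lemma Dk_scale (K : fieldType) (G : zmodType) (X : lmodType K) (k : int) (h : G -> X) (r : K) x y :
  Dk k (fun z => r *: h z) x y = r *: Dk k h x y.
Proof. by rewrite /Dk !scalerMzr !scalerBr !scalerDr. Qed.

Lemma Dk_comp_mulrn (G X : zmodType) (k : int) (h : G -> X) (m : nat) x y :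
  Dk k (fun z => h (z *+ m)) x y = Dk k h (x *+ m) (y *+ m).
Proof.
rewrite /Dk (_ : (x + y *~ k) *+ m = x *+ m + y *+ m *~ k); last gz.
rewrite (_ : (x - y *~ k) *+ m = x *+ m - y *+ m *~ k); last gz.
by rewrite mulrnDl mulrnBl.
Qed.

Lemma Dk_g (G X : zmodType) (k : int) (f : G -> X) p q :
  Dk k (fun z => f (z *+ 2) - f z *+ 8) p q = Dk k f (p *+ 2) (q *+ 2) - Dk k f p q *+ 8.
Proof.
rewrite -(Dk_comp_mulrn k f 2) /Dk; xring.
Qed.

Lemma Dk_sub (G X : zmodType) (k : int) (h1 h2 : G -> X) x y :
  Dk k (fun z => h1 z - h2 z) x y = Dk k h1 x y - Dk k h2 x y.
Proof. rewrite /Dk; xring. Qed.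

Lemma nDk_le (R : realType) (K : fieldType) (v : K -> R) (G : zmodType) (X : lmodType K) (nrm : X -> R) :
  nA_valuation v -> nA_norm v nrm -> forall (k : int) (h : G -> X) x y M,
  nrm (h (x + y *~ k)) <= M -> nrm (h (x - y *~ k)) <= M -> nrm (h (x + y)) <= M ->
  nrm (h (x - y)) <= M -> nrm (h x) <= M -> nrm (Dk k h x y) <= M.
Proof.
move=> hv hn k h x y M h1 h2 h3 h4 h5.
have hz w (z : int) : nrm w <= M -> nrm (w *~ z) <= M.
  by move=> hw; apply: le_trans (nMz_le hv hn _ _) hw.
by rewrite /Dk; repeat apply: (nBle hv hn); (try apply: (nDle hn)); try apply: hz.
Qed.

Lemma additive_mulrn (G X : zmodType) (F : G -> X) : additive_fun F -> forall x m, F (x *+ m) = F x *+ m.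
Proof.
move=> hF x; elim=> [|m IH].
  rewrite !mulr0n; have h := hF 0 0; rewrite addr0 -[X in X = _]addr0 in h.
  exact: (esym (addrI _ h)).
by rewrite !mulrS hF IH.
Qed.

Lemma nDk_lt (R : realType) (K : fieldType) (v : K -> R) (G : zmodType) (X : lmodType K) (nrm : X -> R) :
  nA_valuation v -> nA_norm v nrm -> forall (k : int) (h : G -> X) x y M,
  nrm (h (x + y *~ k)) < M -> nrm (h (x - y *~ k)) < M -> nrm (h (x + y)) < M ->
  nrm (h (x - y)) < M -> nrm (h x) < M -> nrm (Dk k h x y) < M.
Proof.
move=> hv hn k h x y M h1 h2 h3 h4 h5.
have hz w (z : int) : nrm w < M -> nrm (w *~ z) < M.
  by move=> hw; apply: le_lt_trans (nMz_le hv hn _ _) hw.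
by rewrite /Dk; repeat apply: (nBlt hv hn); (try apply: (nDlt hn)); try apply: hz.
Qed.

Lemma PhiMax_scale (R : realType) (K : fieldType) (G : zmodType) (v : K -> R) (k : int)
    (phi : G -> G -> R) (x : G) (i n : nat) :
  nA_valuation v -> (2%:R : K) != 0 ->
  PhiMax v k phi (x *+ 2 ^ i) 0 n = v ((2%:R : K) ^+ i) * PhiMax v k phi x i n.
Proof.
move=> hv h2; rewrite /PhiMax add0n.
have -> : \big[Num.max/0]_(i <= j < i + n) PhiTerm v k phi x j =
          \big[Num.max/0]_(0 <= j < n) PhiTerm v k phi x (j + i).
  by rewrite -{1}[i]add0n big_addn addKn.
have hV0 : 0 <= v ((2%:R : K) ^+ i) by exact: v_ge0.
have hV : v ((2%:R : K) ^+ i) != 0.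
  by apply/eqP => /(v_eq0 hv) /eqP; rewrite expf_eq0 (negbTE h2) andbF.
have fop : {morph (fun t => v ((2%:R : K) ^+ i) * t) : a b / Num.max a b >-> Num.max a b}.
  by move=> a b; exact: maxr_pMr.
rewrite (big_morph _ fop (mulr0 _)); apply: eq_bigr => j _.
rewrite /PhiTerm -mulrnA -expnD (addnC i j) -addSn exprD (vM hv).
by rewrite invfM [RHS]mulrC -!mulrA mulVf // mulr1.
Qed.

Lemma bigmax_recr (R : realType) (F : nat -> R) n :
  \big[Num.max/0]_(0 <= j < n.+1) F j = Num.max (\big[Num.max/0]_(0 <= j < n) F j) (F n).
Proof.
rewrite /index_iota !subn0 -addn1 iotaD add0n cats1.
elim: (iota 0 n) => [|a s IH]; first by rewrite big_cons !big_nil maxC.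
by rewrite rcons_cons !big_cons IH maxA.
Qed.

Lemma three_div (k : int) : exists m : int, k ^+ 2 * (k ^+ 2 - 1) = 3 * m.
Proof.
have hk := divz_eq k 3.
set q := (k %/ 3)%Z in hk; set r := (k %% 3)%Z in hk.
have h0 : 0 <= r by rewrite modz_ge0.
have h3 : r < 3 by rewrite ltz_pmod.
have : r = 0 \/ r = 1 \/ r = 2 by lia.
case=> [hr|[hr|hr]]; rewrite hk hr.
- by exists (3 * q ^+ 2 * (9 * q ^+ 2 - 1)); ring.
- by exists ((q * 3 + 1) ^+ 2 * q * (3 * q + 2)); ring.
- by exists ((q * 3 + 2) ^+ 2 * (3 * q + 1) * (q + 1)); ring.
Qed.

Lemma const_facts (K : fieldType) (k : int) : ((2 * k ^+ 2 * (k ^+ 2 - 1))%:~R : K) != 0 ->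
  [/\ (2%:R : K) != 0, (3%:R : K) != 0, ((k ^+ 2 * (k ^+ 2 - 1))%:~R : K) != 0 &
      ((2 * k ^+ 2 * (k ^+ 2 - 1))%:~R : K) = 2%:R * (k ^+ 2 * (k ^+ 2 - 1))%:~R].
Proof.
move=> hc.
have e : ((2 * k ^+ 2 * (k ^+ 2 - 1))%:~R : K) = 2%:R * (k ^+ 2 * (k ^+ 2 - 1))%:~R.
  by rewrite -mulrA intrM.
split => //.
- by apply: contra hc => /eqP h; rewrite e h mul0r.
- apply: contra hc => /eqP h; rewrite e; have [m ->] := three_div k.
  by rewrite intrM (_ : (3 : int)%:~R = (3%:R : K)) // h mul0r mulr0.
- by apply: contra hc => /eqP h; rewrite e h mulr0.
Qed.

Unset Implicit Arguments. Set Strict Implicit.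

Theorem theorem2p2 (R : realType) (K : fieldType) (G : zmodType) (X : lmodType K)
    (v : K -> R) (nrm : X -> R) (k : int) (phi : G -> G -> R) (f : G -> X) :
  nA_valuation v -> nontrivial_valuation v ->
  nA_norm v nrm -> norm_complete nrm ->
  k != 0 -> k != 1 -> k != -1 ->
  (* well-definedness of the divisions by |2^n| and |2 k^2 (k^2-1)| *)
  ((2 * k ^+ 2 * (k ^+ 2 - 1))%:~R : K) != 0 ->
  (forall x y, 0 <= phi x y) ->
  (forall x y : G,
     (fun n : nat => Num.max (phi (x *+ (2 ^ n.+1)) (y *+ (2 ^ n.+1)))
                       (v (8%:R : K) * phi (x *+ (2 ^ n)) (y *+ (2 ^ n)))
                     / v ((2%:R : K) ^+ n)) @ \oo --> 0) ->
  (* lim_n Phi(2^{n-1}x)/|2^n k^2(k^2-1)| = 0, indexed by n = m+1 *)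
  (forall x : G,
     (fun m : nat => Phi v k phi (x *+ (2 ^ m))
                     / v ((2%:R : K) ^+ m.+1 * ((k ^+ 2 * (k ^+ 2 - 1))%:~R))) @ \oo --> 0) ->
  (forall x : G, cvgn (fun n : nat => PhiMax v k phi x 0 n)) ->
  (forall x : G, f (- x) = - f x) ->
  (forall x y : G, nrm (Dk k f x y) <= phi x y) ->
  exists A : G -> X,
    [/\ additive_fun A,
        (forall x : G,
           nrm (f (x *+ 2) - f x *+ 8 - A x)
             <= limn (fun n : nat => PhiMax v k phi x 0 n)
                / v ((2 * k ^+ 2 * (k ^+ 2 - 1))%:~R)) &
        ((forall x : G,
            (fun i : nat => limn (fun n : nat => PhiMax v k phi x i n)) @ \oo --> 0) ->
         forall B : G -> X, additive_fun B ->
           (forall x : G,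
              nrm (f (x *+ 2) - f x *+ 8 - B x)
                <= limn (fun n : nat => PhiMax v k phi x 0 n)
                   / v ((2 * k ^+ 2 * (k ^+ 2 - 1))%:~R)) ->
           B = A)].
Proof.
move=> hv hnt hn hcomp hk0 hk1 hkN1 hc hphi0 H1 H2 H3 hodd hD.
have [h2 h3 hc0 hcE] := const_facts hc.
have vc0 : 0 < v ((k ^+ 2 * (k ^+ 2 - 1))%:~R) := v_neq0 hv hc0.
have vc : 0 < v ((2 * k ^+ 2 * (k ^+ 2 - 1))%:~R) := v_neq0 hv hc.
have v2le : v (2%:R : K) <= 1 := vnat hv 2.
have vcle : v ((2 * k ^+ 2 * (k ^+ 2 - 1))%:~R : K) <= v ((k ^+ 2 * (k ^+ 2 - 1))%:~R).
  by rewrite hcE (vM hv); apply: ler_piMl => //; exact: v_ge0.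
have hVpos n : 0 < v ((2%:R : K) ^+ n) by apply: v_neq0 => //; rewrite expf_eq0 (negbTE h2) andbF.
have hf0 : f 0 = 0.
  apply: (cancel_n h2); rewrite mulr2n -{1}oppr0 hodd.
  by rewrite addNr.
pose gg := fun x => f (x *+ 2) - f x *+ 8.
pose a := fun n x => ((2%:R : K) ^+ n)^-1 *: gg (x *+ 2 ^ n).
have hstepE x n : a n.+1 x - a n x =
    ((2%:R : K) ^+ n.+1)^-1 *: (gg (x *+ 2 ^ n *+ 2) - gg (x *+ 2 ^ n) *+ 2).
  rewrite [RHS]scalerBr /a /= (_ : x *+ 2 ^ n.+1 = x *+ 2 ^ n *+ 2); last by rewrite expnSr mulrnA.
  congr (_ - _); rewrite -[in RHS]scaler_nat [RHS]scalerA; congr (_ *: _).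
  by rewrite exprSr invfM -mulrA mulVf ?mulr1.
have hstep x n : nrm (a n.+1 x - a n x) <= Phi v k phi (x *+ 2 ^ n)
        / v ((2%:R : K) ^+ n.+1 * ((k ^+ 2 * (k ^+ 2 - 1))%:~R)).
  rewrite hstepE (nZ hn) (vV hv) (vM hv).
  have hg := gstep hv hn hodd hf0 hD (x *+ 2 ^ n).
  have hg' : nrm (gg (x *+ 2 ^ n *+ 2) - gg (x *+ 2 ^ n) *+ 2) <=
      Phi v k phi (x *+ 2 ^ n) / v ((k ^+ 2 * (k ^+ 2 - 1))%:~R).
    by rewrite ler_pdivlMr // mulrC.
  apply: le_trans (ler_wpM2l _ hg') _; first by rewrite invr_ge0 ltW.
  by rewrite invfM mulrCA.
have hA x : {l | convn nrm (fun n => a n x) l}.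
  apply: cid; apply: hcomp; exact: (steps_cauchy hv hn (hstep x) (H2 x)).
pose A x := sval (hA x).
have hAc x : convn nrm (fun n => a n x) (A x) := svalP (hA x).
have hoddA x : A (- x) = - A x.
  apply: (conv_uniq hv hn (hAc (- x))); apply: conv_ext (conv_N hv hn (hAc x)) => n.
  rewrite /a /= -scalerN; congr (_ *: _); rewrite /gg !mulNrn !hodd; xring.
have hdblA x : A (x *+ 2) = A x *+ 2.
  apply: (conv_uniq hv hn (hAc (x *+ 2))); apply: conv_ext (conv_Mn hv hn 2 (conv_shift (hAc x))) => n.
  rewrite /a /= -mulrnA -expnS scalerMnl; congr (_ *: _).
  by rewrite -mulr_natr exprS invfM mulrAC mulVf ?mul1r.
have hDA x y : Dk k A x y = 0.
  apply/(n_le0 hv hn)/le0_of_lt => e he.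
  have [N0 hN0] := cvg0_lt (H1 x y) he.
  have [N1 e1] := hAc (x + y *~ k) e he.
  have [N2 e2] := hAc (x - y *~ k) e he.
  have [N3 e3] := hAc (x + y) e he.
  have [N4 e4] := hAc (x - y) e he.
  have [N5 e5] := hAc x e he.
  pose n := maxn N0 (maxn N1 (maxn N2 (maxn N3 (maxn N4 N5)))).
  have -> : Dk k A x y = Dk k (fun z => A z - a n z) x y + Dk k (a n) x y by rewrite Dk_sub subrK.
  apply: (nDlt hn).
    apply: (nDk_lt hv hn); rewrite (nB_sym hv hn);
      [apply: e1|apply: e2|apply: e3|apply: e4|apply: e5]; by rewrite /n !leq_max leqnn ?orbT.
  rewrite (_ : Dk k (a n) x y = ((2%:R:K) ^+ n)^-1 *: Dk k gg (x *+ 2 ^ n) (y *+ 2 ^ n)); last first.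
    by rewrite /a /= (Dk_scale k (fun z => gg (z *+ 2 ^ n))) Dk_comp_mulrn.
  rewrite (nZ hn) (vV hv) /gg Dk_g.
  apply: le_lt_trans (hN0 n _); last by rewrite /n leq_max leqnn.
  rewrite mulrC; apply: ler_wpM2r; first by rewrite invr_ge0 ltW.
  rewrite -!mulrnA -expnSr.
  apply: (nBle hv hn); first by rewrite le_max hD.
  rewrite (nMn hn) le_max; apply/orP; right; apply: ler_wpM2l; [exact: v_ge0|exact: hD].
have hQ p q : Qe A p q = 0.
  have := alg_Q hDA p q; rewrite -scaler_int => /eqP; rewrite scaler_eq0 (negbTE hc0) /=.
  by move/eqP.
have hAadd : additive_fun A := alg_add h2 h3 hoddA hdblA hQ.
have hmono x n : PhiMax v k phi x 0 n <= PhiMax v k phi x 0 n.+1.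
  by rewrite /PhiMax !add0n bigmax_recr le_max lexx.
have hPT x n : PhiTerm v k phi x n <= PhiMax v k phi x 0 n.+1.
  by rewrite /PhiMax add0n bigmax_recr le_max lexx orbT.
set vcc := v ((2 * k ^+ 2 * (k ^+ 2 - 1))%:~R).
have hdiv p q : p <= q -> p / vcc <= q / vcc.
  by move=> h; apply: ler_wpM2r => //; rewrite invr_ge0 ltW.
have hbnd x n : nrm (gg x - a n x) <= PhiMax v k phi x 0 n / vcc.
  elim: n => [|n IH].
    by rewrite /a /= expr0 invr1 scale1r expn0 mulr1n subrr (n0 hn) /PhiMax big_geq ?mul0r.
  rewrite (_ : gg x - a n.+1 x = (gg x - a n x) - (a n.+1 x - a n x)); last by rewrite opprB addrA subrK.
  apply: (nBle hv hn).
    by apply: le_trans IH _; apply: hdiv; exact: hmono.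
  apply: le_trans (hstep x n) _.
  apply: le_trans (_ : _ <= PhiTerm v k phi x n / vcc) _; last exact: hdiv (hPT x n).
  rewrite /PhiTerm (vM hv) invfM mulrA; apply: ler_wpM2l.
    by apply: divr_ge0; [exact: Phi_ge0 | exact: ltW].
  by rewrite lef_pV2 ?posrE.
have hbound x : nrm (f (x *+ 2) - f x *+ 8 - A x) <= limn (fun n => PhiMax v k phi x 0 n) / vcc.
  apply/ler_addgt0Pr => e he.
  have [N hN] := hAc x e he.
  have hLn n : PhiMax v k phi x 0 n <= limn (fun n => PhiMax v k phi x 0 n).
    apply: (nondecreasing_cvgn_le _ (H3 x)); exact/nondecreasing_seqP/hmono.
  have hL0 : 0 <= limn (fun n => PhiMax v k phi x 0 n) / vcc.
    apply: divr_ge0 (ltW vc); apply: le_trans (hLn 0%N); by rewrite /PhiMax big_geq.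
  rewrite (_ : f (x *+ 2) - f x *+ 8 - A x = (gg x - a N x) + (a N x - A x)); last by rewrite addrA subrK.
  apply: le_trans (nD hn _ _) _; rewrite ge_max; apply/andP; split.
    apply: le_trans (hbnd x N) _; apply: le_trans (hdiv _ _ (hLn N)) _; by rewrite lerDl ltW.
  by apply: le_trans (ltW (hN N (leqnn N))) _; rewrite lerDr.
exists A; split => //.
move=> Hi B hB hBb; apply: funext => x.
apply/subr0_eq/(n_le0 hv hn)/le0_of_lt => e he.
have hLz i : limn (fun n => PhiMax v k phi (x *+ 2 ^ i) 0 n) =
    v ((2%:R:K) ^+ i) * limn (fun n => PhiMax v k phi x i n).
  have -> : (fun n => PhiMax v k phi x i n) =
      (fun n => (v ((2%:R:K) ^+ i))^-1 * PhiMax v k phi (x *+ 2 ^ i) 0 n).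
    apply: funext => n; rewrite PhiMax_scale // mulrA mulVf ?mul1r //; exact: lt0r_neq0 (hVpos i).
  rewrite (cvg_lim (@Rhausdorff R) (cvgMr (a := (v ((2%:R:K) ^+ i))^-1) (H3 (x *+ 2 ^ i)))).
  by rewrite mulrA mulfV ?mul1r //; exact: lt0r_neq0 (hVpos i).
have hw i : nrm (B x - A x) <= limn (fun n => PhiMax v k phi x i n) / vcc.
  pose z := x *+ 2 ^ i.
  have ez : B z - A z = (B x - A x) *+ 2 ^ i by rewrite /z (additive_mulrn hB) (additive_mulrn hAadd) mulrnBl.
  have hz : nrm (B z - A z) <= limn (fun n => PhiMax v k phi z 0 n) / vcc.
    rewrite (_ : B z - A z = (f (z *+ 2) - f z *+ 8 - A z) - (f (z *+ 2) - f z *+ 8 - B z)); last by xring.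
    exact: (nBle hv hn (hbound z) (hBb z)).
  rewrite ez (nMn hn) hLz natrX -mulrA ler_pM2l in hz => //.
have [i hi] := cvg0_lt (Hi x) (mulr_gt0 he vc).
apply: le_lt_trans (hw i) _; rewrite ltr_pdivrMr //; exact: hi i (leqnn i).
Qed.
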